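(* Under the assumptions of the following setting, the solution $(S_t,Q_t)$ of the deterministic delayed system \[ S_t'=\big[\alpha-k\sigma(Q_t)\big]S_t,\qquad Q_t'=d-mQ_t-k\sigma(Q_t)S_t+k\,b\,e^{-\mu\zeta}\sigma(Q_{t-\zeta})S_{t-\zeta},\quad t\ge0, \] with continuous initial functions $(S_{0,t},Q_{0,t})$ on $[-\zeta,0]$ satisfies, for some constant $c>0$ and all $t\ge0$, \[ |(S_t,Q_t)-E_0|\le c\,e^{-\eta t},\qquad E_0=(0,d/m),\quad\eta=\gamma\wedge\tfrac m2, \] where $\gamma=kd/m-\alpha$. Assumptions: $\gamma>0$, $M>d/m$, and for all $t\in[-\zeta,0]$: (i) $(S_{0,t},Q_{0,t})\in[0,M]\times[d/m,M]$; (ii) $b\,e^{-\mu\zeta}Q_{0,t}S_{0,t}>\frac dm S_{0,0}$ and $b\,e^{-\mu\zeta}>1$; (iii) $S_{0,t}<\frac{mM-d}{kbe^{-\mu\zeta}M}$.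
   Context: Parameters $\alpha,k,d,m,b,\mu,\zeta,M$ are positive constants. $\sigma:\mathbb R_+\to\mathbb R_+$ is a $C^\infty$ function with $\sigma(x)=x$ for $0\le x\le M$, $\sigma(x)=M+1$ for $x>M+1$, and $0\le\sigma'(x)\le C$ for some constant $C>1$. $|\cdot|$ is the Euclidean norm. *)

(* Defs.v *)
From Stdlib Require Import Reals Lra.
Open Scope R_scope.

Definition smooth_with (f : R -> R) (D : nat -> R -> R) : Prop :=
  D 0%nat = f /\ forall (n : nat) (x : R), derivable_pt_lim (D n) x (D (S n) x).

Definition continuous_from (a : R) (f : R -> R) : Prop :=
  forall t, a <= t -> forall eps, 0 < eps -> exists delta, 0 < delta /\
    forall s, a <= s -> Rabs (s - t) < delta -> Rabs (f s - f t) < eps.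

Definition right_deriv (f : R -> R) (t l : R) : Prop :=
  forall eps, 0 < eps -> exists delta, 0 < delta /\
    forall h, 0 < h < delta -> Rabs ((f (t + h) - f t) / h - l) < eps.

(* Main.v *)
Require Import Defs.
From Stdlib Require Import Reals Lra Classical.
Open Scope R_scope.
Lemma exp_mono x y : x <= y -> exp x <= exp y.
Proof. intros H; destruct (Rle_lt_or_eq_dec _ _ H) as [h|h].
- left; apply exp_increasing; exact h.
- subst; lra. Qed.

Lemma nonincr (f df : R -> R) a b : a <= b ->
  (forall c, a <= c <= b -> continuity_pt f c) ->
  (forall c, a < c < b -> derivable_pt_lim f c (df c)) ->
  (forall c, a < c < b -> df c <= 0) -> f b <= f a.
Proof.
  intros Hab Hc Hd Hn.
  destruct (Rle_lt_or_eq_dec _ _ Hab) as [h|h]; [|subst; lra].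
  assert (pr1 : forall c, a < c < b -> derivable_pt f c).
  { intros c Hc'. exists (df c). apply Hd; exact Hc'. }
  assert (pr2 : forall c, a < c < b -> derivable_pt id c).
  { intros c _. apply derivable_pt_id. }
  destruct (MVT f id a b pr1 pr2 h Hc) as [c [P HP]].
  { intros c _. apply derivable_continuous_pt, derivable_pt_id. }
  rewrite (derive_pt_eq_0 f c (df c) (pr1 c P) (Hd c P)) in HP.
  rewrite (derive_pt_eq_0 id c 1 (pr2 c P)) in HP.
  2:{ apply derivable_pt_lim_id. }
  unfold id in HP. assert (df c <= 0) by (apply Hn; exact P). nra.
Qed.

Lemma cont_from_pt a f t : continuous_from a f -> a < t -> continuity_pt f t.
Proof.
  intros Hf Ht eps Heps.
  destruct (Hf t (Rlt_le _ _ Ht) eps Heps) as [d [Hd Hd']].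
  exists (Rmin d (t - a)). split. { apply Rmin_pos; lra. }
  intros x [_ Hx]. unfold R_dist in *. simpl in *. unfold R_dist in *.
  apply Hd'.
  - assert (Rabs (x - t) < t - a) by (eapply Rlt_le_trans; [exact Hx| apply Rmin_r]).
    apply Rabs_def2 in H. lra.
  - eapply Rlt_le_trans; [exact Hx| apply Rmin_l].
Qed.

Lemma real_ind (P : R -> Prop) :
  (forall T, 0 <= T -> (forall s, 0 <= s < T -> P s) ->
     exists del, 0 < del /\ forall s, T <= s < T + del -> P s) ->
  forall t, 0 <= t -> P t.
Proof.
  intros Hstep t0 Ht0.
  set (A := fun x => 0 <= x <= t0 /\ forall s, 0 <= s < x -> P s).
  assert (Hb : bound A). { exists t0. intros x [Hx _]. lra. }
  assert (Hne : exists x, A x). { exists 0. split. lra. intros s Hs; lra. }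
  destruct (completeness A Hb Hne) as [T [HT1 HT2]].
  assert (T0 : 0 <= T). { apply HT1. split. lra. intros s Hs; lra. }
  assert (Tt : T <= t0). { apply HT2. intros x [Hx _]. lra. }
  assert (Hbel : forall s, 0 <= s < T -> P s).
  { intros s Hs. apply NNPP. intro Hn.
    assert (T <= s). { apply HT2. intros x [Hx Hx']. destruct (Rle_lt_dec x s) as [l|l]; auto.
      exfalso. apply Hn. apply Hx'. lra. }
    lra. }
  destruct (Hstep T T0 Hbel) as [del [Hdel Hdel']].
  destruct (Rlt_le_dec t0 (T + del)) as [l|l].
  - apply Hdel'. lra.
  - exfalso. assert (A (T + del)).
    { split. lra. intros s Hs. destruct (Rlt_le_dec s T). apply Hbel; lra. apply Hdel'; lra. }
    apply HT1 in H. lra.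
Qed.

Lemma rd_of_lim f t l : derivable_pt_lim f t l -> right_deriv f t l.
Proof.
  intros H eps Heps. destruct (H eps Heps) as [d Hd]. exists d. split. apply cond_pos.
  intros h Hh. apply Hd. lra. rewrite Rabs_right; lra.
Qed.

Lemma rd_pos f t l : right_deriv f t l -> 0 < l ->
  exists del, 0 < del /\ forall s, t < s < t + del -> f t < f s.
Proof.
  intros H Hl. destruct (H (l/2) ltac:(lra)) as [d [Hd Hd']]. exists d; split; auto.
  intros s Hs. specialize (Hd' (s - t) ltac:(lra)).
  replace (t + (s - t)) with s in Hd' by ring.
  apply Rabs_def2 in Hd'. destruct Hd' as [_ H2].
  assert (0 < (f s - f t) / (s - t)) by lra.
  assert (0 < s - t) by lra.
  apply Rmult_lt_compat_r with (r := s - t) in H0; auto.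
  field_simplify in H0; lra.
Qed.

Lemma rd_neg f t l : right_deriv f t l -> l < 0 ->
  exists del, 0 < del /\ forall s, t < s < t + del -> f s < f t.
Proof.
  intros H Hl. destruct (H (-l/2) ltac:(lra)) as [d [Hd Hd']]. exists d; split; auto.
  intros s Hs. specialize (Hd' (s - t) ltac:(lra)).
  replace (t + (s - t)) with s in Hd' by ring.
  apply Rabs_def2 in Hd'. destruct Hd' as [H1 _].
  assert ((f s - f t) / (s - t) < 0) by lra.
  assert (0 < s - t) by lra.
  apply Rmult_lt_compat_r with (r := s - t) in H0; auto.
  field_simplify in H0; lra.
Qed.

Lemma cont_gt a f t c : continuous_from a f -> a <= t -> c < f t ->
  exists del, 0 < del /\ forall s, t <= s < t + del -> c < f s.
Proof.
  intros Hf Ht Hc. destruct (Hf t Ht (f t - c) ltac:(lra)) as [d [Hd Hd']].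
  exists d; split; auto. intros s Hs. specialize (Hd' s ltac:(lra)).
  assert (Rabs (s - t) < d) by (rewrite Rabs_right; lra).
  apply Hd' in H. apply Rabs_def2 in H. lra.
Qed.

Lemma cont_lt a f t c : continuous_from a f -> a <= t -> f t < c ->
  exists del, 0 < del /\ forall s, t <= s < t + del -> f s < c.
Proof.
  intros Hf Ht Hc. destruct (Hf t Ht (c - f t) ltac:(lra)) as [d [Hd Hd']].
  exists d; split; auto. intros s Hs. specialize (Hd' s ltac:(lra)).
  assert (Rabs (s - t) < d) by (rewrite Rabs_right; lra).
  apply Hd' in H. apply Rabs_def2 in H. lra.
Qed.

Lemma lim_ge a f T c : continuous_from a f -> a < 0 -> 0 < T ->
  (forall s, 0 <= s < T -> c <= f s) -> c <= f T.
Proof.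
  intros Hf Ha HT H. apply Rnot_lt_le. intro Hc.
  destruct (Hf T ltac:(lra) (c - f T) ltac:(lra)) as [d [Hd Hd']].
  set (s := Rmax 0 (T - d/2)).
  assert (0 <= s) by apply Rmax_l. assert (T - d/2 <= s) by apply Rmax_r.
  assert (s < T) by (unfold s; apply Rmax_lub_lt; lra).
  specialize (Hd' s ltac:(lra)). assert (Rabs (s - T) < d) by (rewrite Rabs_left; lra).
  apply Hd' in H3. apply Rabs_def2 in H3. specialize (H s ltac:(lra)). lra.
Qed.

Lemma lim_le a f T c : continuous_from a f -> a < 0 -> 0 < T ->
  (forall s, 0 <= s < T -> f s <= c) -> f T <= c.
Proof.
  intros Hf Ha HT H. apply Rnot_lt_le. intro Hc.
  destruct (Hf T ltac:(lra) (f T - c) ltac:(lra)) as [d [Hd Hd']].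
  set (s := Rmax 0 (T - d/2)).
  assert (0 <= s) by apply Rmax_l. assert (T - d/2 <= s) by apply Rmax_r.
  assert (s < T) by (unfold s; apply Rmax_lub_lt; lra).
  specialize (Hd' s ltac:(lra)). assert (Rabs (s - T) < d) by (rewrite Rabs_left; lra).
  apply Hd' in H3. apply Rabs_def2 in H3. specialize (H s ltac:(lra)). lra.
Qed.

Lemma dexp a t : derivable_pt_lim (fun t => exp (a * t)) t (a * exp (a * t)).
Proof.
  replace (a * exp (a*t)) with (exp (a*t) * a) by ring.
  apply (derivable_pt_lim_comp (fun t => a * t) exp t a (exp (a*t))).
  - assert (H := derivable_pt_lim_mult (fct_cte a) id t 0 1 (derivable_pt_lim_const a t) (derivable_pt_lim_id t)).
    unfold mult_fct, fct_cte, id in H. replace (0 * t + a * 1) with a in H by ring. exact H.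
  - apply derivable_pt_lim_exp.
Qed.

Lemma dprod_exp f l a t : derivable_pt_lim f t l ->
  derivable_pt_lim (fun t => f t * exp (a * t)) t ((l + a * f t) * exp (a * t)).
Proof.
  intros H. replace ((l + a * f t) * exp (a * t)) with (l * exp (a*t) + f t * (a * exp (a*t))) by ring.
  apply (derivable_pt_lim_mult f (fun t => exp (a*t))); auto. apply dexp.
Qed.

Lemma dminus f g t lf lg : derivable_pt_lim f t lf -> derivable_pt_lim g t lg ->
  derivable_pt_lim (fun x => f x - g x) t (lf - lg).
Proof. intros; apply (derivable_pt_lim_minus f g); auto. Qed.

Lemma dscal K f t l : derivable_pt_lim f t l -> derivable_pt_lim (fun x => K * f x) t (K * l).
Proof. intros H. apply (derivable_pt_lim_scal f K t l H). Qed.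

Lemma dconst K t : derivable_pt_lim (fun _ => K) t 0.
Proof. apply derivable_pt_lim_const. Qed.

Lemma cexp a t : continuity_pt (fun t => exp (a * t)) t.
Proof. apply derivable_continuous_pt. exists (a * exp (a*t)). apply dexp. Qed.

Lemma lt_div_mult x X Y : 0 < Y -> x < X / Y -> Y * x < X.
Proof. intros HY H. replace X with ((X / Y) * Y) by (field; lra). nra. Qed.
Theorem mainTheorem7
  (alpha k d m b mu zeta M C : R)
  (Halpha : 0 < alpha) (Hk : 0 < k) (Hd : 0 < d) (Hm : 0 < m) (Hb : 0 < b)
  (Hmu : 0 < mu) (Hzeta : 0 < zeta) (HM : 0 < M) (HC : 1 < C)
  (sigma : R -> R) (Dsig : nat -> R -> R)
  (Hsmooth : smooth_with sigma Dsig)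
  (Hsig_nonneg : forall x, 0 <= x -> 0 <= sigma x)
  (Hsig_id : forall x, 0 <= x <= M -> sigma x = x)
  (Hsig_top : forall x, M + 1 < x -> sigma x = M + 1)
  (Hsig_der : forall x, 0 <= x -> 0 <= Dsig 1%nat x <= C)
  (S Q : R -> R)
  (HScont : continuous_from (- zeta) S) (HQcont : continuous_from (- zeta) Q)
  (HSode0 : right_deriv S 0 ((alpha - k * sigma (Q 0)) * S 0))
  (HQode0 : right_deriv Q 0 (d - m * Q 0 - k * sigma (Q 0) * S 0
              + k * b * exp (- mu * zeta) * sigma (Q (0 - zeta)) * S (0 - zeta)))
  (HSode : forall t, 0 < t -> derivable_pt_lim S t ((alpha - k * sigma (Q t)) * S t))
  (HQode : forall t, 0 < t -> derivable_pt_lim Q t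
             (d - m * Q t - k * sigma (Q t) * S t
              + k * b * exp (- mu * zeta) * sigma (Q (t - zeta)) * S (t - zeta)))
  (Hgamma : 0 < k * d / m - alpha)
  (HMdm : d / m < M)
  (Hi : forall t, - zeta <= t <= 0 -> 0 <= S t <= M /\ d / m <= Q t <= M)
  (Hii : forall t, - zeta <= t <= 0 -> b * exp (- mu * zeta) * Q t * S t > d / m * S 0)
  (Hii' : b * exp (- mu * zeta) > 1)
  (Hiii : forall t, - zeta <= t <= 0 ->
            S t < (m * M - d) / (k * b * exp (- mu * zeta) * M)) :
  exists c, 0 < c /\ forall t, 0 <= t ->
    sqrt ((S t - 0) ^ 2 + (Q t - d / m) ^ 2)
      <= c * exp (- (Rmin (k * d / m - alpha) (m / 2)) * t).
Proof.
  assert (Ekd : k * d / m = k * (d / m)) by (field; lra).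
  rewrite Ekd in *.
  set (E := exp (- mu * zeta)) in *.
  set (dm := d / m) in *.
  assert (HE : 0 < E) by apply exp_pos.
  assert (Hdm : 0 < dm) by (unfold dm; apply Rdiv_lt_0_compat; lra).
  assert (Hmdm : m * dm = d) by (unfold dm; field; lra).
  assert (HS0 : 0 < S 0).
  { destruct (Hi 0 ltac:(lra)) as [[h1 _] [h2 _]]. specialize (Hii 0 ltac:(lra)).
    destruct (Rle_lt_or_eq_dec _ _ h1) as [h|h]; auto. rewrite <- h in Hii. lra. }
  assert (HB : forall t, - zeta <= t <= 0 -> k * b * E * M * S t < m * M - d).
  { intros t Ht. apply lt_div_mult. 
    apply Rmult_lt_0_compat; [|lra]. apply Rmult_lt_0_compat; [|lra]. nra.
    apply Hiii; auto. }
  set (Inv := fun t => 0 < S t /\ dm <= Q t <= M).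
  assert (Hinv : forall t, 0 <= t -> Inv t).
  { apply real_ind. intros T HT Hbel.
    assert (Mono : forall a c, 0 <= a <= c -> c <= T -> S c <= S a).
    { intros a c Hac HcT.
      apply (nonincr S (fun x => (alpha - k * sigma (Q x)) * S x) a c); [lra| | |].
      - intros x Hx. apply (cont_from_pt (-zeta)); auto; lra.
      - intros x Hx. apply HSode; lra.
      - intros x Hx. destruct (Hbel x ltac:(lra)) as [h1 h2].
        rewrite Hsig_id by lra. assert (k * Q x >= k * dm) by nra.
        assert (alpha - k * Q x < 0) by lra. nra. }
    assert (HST : 0 < S T).
    { destruct (Rle_lt_or_eq_dec _ _ HT) as [hT|hT]; [|subst T; auto].
      assert (H := nonincr (fun x => - (S x * exp ((k*M) * x)))
                 (fun x => - (((alpha - k * sigma (Q x)) * S x + (k*M) * S x) * exp ((k*M) * x)))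
                 0 T ltac:(lra)).
      simpl in H. rewrite Rmult_0_r, exp_0, Rmult_1_r in H.
      assert (S 0 <= S T * exp (k * M * T)).
      { cut (- (S T * exp (k * M * T)) <= - S 0); [lra|]. apply H.
        - intros x Hx. apply continuity_pt_opp. apply continuity_pt_mult.
          apply (cont_from_pt (-zeta)); auto; lra. apply cexp.
        - intros x Hx. apply derivable_pt_lim_opp. apply dprod_exp. apply HSode; lra.
        - intros x Hx. destruct (Hbel x ltac:(lra)) as [h1 h2].
          rewrite Hsig_id by lra. assert (0 < exp (k*M*x)) by apply exp_pos.
          assert (0 <= (alpha - k * Q x + k * M)) by nra. 
          assert (0 <= (alpha - k * Q x) * S x + k * M * S x) by nra. nra. }
      assert (0 < exp (k*M*T)) by apply exp_pos.
      destruct (Rle_lt_dec (S T) 0); [|auto]. nra. }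
    assert (HQT : dm <= Q T <= M).
    { destruct (Rle_lt_or_eq_dec _ _ HT) as [hT|hT].
      - split.
        + apply (lim_ge (-zeta)); auto; try lra. intros s Hs; apply Hbel; auto.
        + apply (lim_le (-zeta)); auto; try lra. intros s Hs; apply Hbel; auto.
      - subst T. apply Hi; lra. }
    set (D := T - zeta).
    assert (HDel : sigma (Q D) = Q D /\ dm <= Q D <= M /\ 0 <= S D /\
                   b * E * Q D * S D > dm * S T /\ k * b * E * M * S D < m * M - d).
    { destruct (Rle_lt_dec T zeta) as [hz|hz].
      - destruct (Hi D ltac:(unfold D; lra)) as [h1 h2].
        assert (S T <= S 0) by (apply Mono; lra).
        rewrite Hsig_id by lra. split; auto. split; auto. split; [lra|]. split.
        + specialize (Hii D ltac:(unfold D; lra)). nra.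
        + apply HB. unfold D; lra.
      - destruct (Hbel D ltac:(unfold D; lra)) as [h1 h2].
        assert (S T <= S D) by (apply Mono; unfold D; lra).
        assert (S D <= S 0) by (apply Mono; unfold D; lra).
        assert (k * b * E * M * S 0 < m * M - d) by (apply HB; lra).
        rewrite Hsig_id by lra. split; auto. split; auto. split; [lra|]. split.
        + assert (0 < b * E) by lra.
          assert (b * E * Q D >= b * E * dm) by nra.
          assert (b * E * Q D * S D >= b * E * dm * S D) by nra.
          assert (0 < dm * S D) by nra.
          assert ((b * E - 1) * (dm * S D) > 0) by nra.
          assert (b * E * dm * S D > dm * S D) by nra.
          assert (dm * S D >= dm * S T) by nra. lra.
        + assert (0 < k * b * E * M) by (apply Rmult_lt_0_compat; [|lra]; apply Rmult_lt_0_compat; [|lra]; nra).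
          assert (k * b * E * M * (S 0 - S D) >= 0) by nra. lra. }
    destruct HDel as [HsD [HQD [HSD [HP1 HP2]]]].
    assert (rdQ : right_deriv Q T (d - m * Q T - k * sigma (Q T) * S T
              + k * b * E * sigma (Q D) * S D)).
    { destruct (Rle_lt_or_eq_dec _ _ HT) as [hT|hT].
      - apply rd_of_lim. apply HQode. lra.
      - unfold D. rewrite <- hT. exact HQode0. }
    destruct (cont_gt (-zeta) S T 0 HScont ltac:(lra) HST) as [d1 [Hd1 Hd1']].
    assert (HL : exists d2, 0 < d2 /\ forall s, T <= s < T + d2 -> dm <= Q s).
    { destruct (Rle_lt_or_eq_dec _ _ (proj1 HQT)) as [h|h].
      - destruct (cont_gt (-zeta) Q T dm HQcont ltac:(lra) h) as [d2 [Hd2 Hd2']].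
        exists d2; split; auto. intros s Hs; left; auto.
      - rewrite <- h in rdQ. rewrite Hsig_id in rdQ by lra.
        destruct (rd_pos _ _ _ rdQ) as [d2 [Hd2 Hd2']].
        { rewrite HsD. nra. }
        exists d2; split; auto. intros s Hs.
        destruct (Rle_lt_or_eq_dec _ _ (proj1 Hs)) as [h'|h'].
        + left. rewrite h. apply Hd2'; lra.
        + subst s. lra. }
    assert (HU : exists d3, 0 < d3 /\ forall s, T <= s < T + d3 -> Q s <= M).
    { destruct (Rle_lt_or_eq_dec _ _ (proj2 HQT)) as [h|h].
      - destruct (cont_lt (-zeta) Q T M HQcont ltac:(lra) h) as [d3 [Hd3 Hd3']].
        exists d3; split; auto. intros s Hs; left; auto.
      - rewrite h in rdQ. rewrite Hsig_id in rdQ by lra.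
        destruct (rd_neg _ _ _ rdQ) as [d3 [Hd3 Hd3']].
        { rewrite HsD. assert (b * E * Q D * S D <= b * E * M * S D).
          { apply Rmult_le_compat_r; auto. assert (0 < b * E) by nra. nra. }
          assert (k*(b*E*Q D*S D) <= k*(b*E*M*S D)) by (apply Rmult_le_compat_l; lra).
          assert (0 <= k*M*S T) by (apply Rmult_le_pos; [apply Rmult_le_pos|]; lra). nra. }
        exists d3; split; auto. intros s Hs.
        destruct (Rle_lt_or_eq_dec _ _ (proj1 Hs)) as [h'|h'].
        + left. rewrite <- h. apply Hd3'; lra.
        + subst s. lra. }
    destruct HL as [d2 [Hd2 Hd2']]. destruct HU as [d3 [Hd3 Hd3']].
    exists (Rmin d1 (Rmin d2 d3)). split.
    { apply Rmin_pos; auto. apply Rmin_pos; auto. }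
    intros s Hs.
    assert (Rmin d1 (Rmin d2 d3) <= d1) by apply Rmin_l.
    assert (Rmin d1 (Rmin d2 d3) <= Rmin d2 d3) by apply Rmin_r.
    assert (Rmin d2 d3 <= d2) by apply Rmin_l.
    assert (Rmin d2 d3 <= d3) by apply Rmin_r.
    split; [apply Hd1'; lra|]. split; [apply Hd2'; lra| apply Hd3'; lra].
  }
  set (gam := k * dm - alpha) in *.
  set (eta := Rmin gam (m / 2)).
  assert (Heg : eta <= gam) by apply Rmin_l.
  assert (Hem : eta <= m / 2) by apply Rmin_r.
  assert (Hep : 0 < eta) by (apply Rmin_pos; lra).
  assert (Sdec : forall t, 0 <= t -> S t * exp (gam * t) <= S 0).
  { intros t Ht.
    assert (H := nonincr (fun x => S x * exp (gam * x))
       (fun x => ((alpha - k * sigma (Q x)) * S x + gam * S x) * exp (gam * x)) 0 t Ht).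
    simpl in H. rewrite Rmult_0_r, exp_0, Rmult_1_r in H. apply H.
    - intros x Hx. apply continuity_pt_mult.
      apply (cont_from_pt (-zeta)); auto; lra. apply cexp.
    - intros x Hx. apply dprod_exp. apply HSode; lra.
    - intros x Hx. destruct (Hinv x ltac:(lra)) as [h1 h2].
      rewrite Hsig_id by lra. assert (0 < exp (gam * x)) by apply exp_pos.
      assert (k * Q x >= k * dm) by nra.
      assert ((alpha - k * Q x) * S x + gam * S x <= 0) by (unfold gam; nra). nra. }
  assert (Sb : forall t, 0 <= t -> S t <= S 0 * exp (- gam * t)).
  { intros t Ht. specialize (Sdec t Ht).
    assert (exp (gam * t) * exp (- gam * t) = 1) by (rewrite <- exp_plus; replace (gam*t + -gam*t) with 0 by ring; apply exp_0).
    assert (0 < exp (- gam * t)) by apply exp_pos.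
    replace (S t) with (S t * exp (gam * t) * exp (- gam * t)) by (rewrite Rmult_assoc, H; ring).
    apply Rmult_le_compat_r; lra. }
  assert (SDb : forall c, 0 <= c -> 0 <= S (c - zeta) <= M * exp (gam * zeta - eta * c)
              /\ sigma (Q (c - zeta)) = Q (c - zeta) /\ Q (c - zeta) <= M).
  { intros c Hc. destruct (Rle_lt_dec c zeta) as [hz|hz].
    - destruct (Hi (c - zeta) ltac:(lra)) as [h1 h2].
      rewrite Hsig_id by lra. split; [|split; auto; lra]. split; [lra|].
      assert (exp 0 <= exp (gam * zeta - eta * c)).
      { apply exp_mono. assert (eta * c <= gam * zeta) by nra. lra. }
      rewrite exp_0 in H. nra.
    - destruct (Hinv (c - zeta) ltac:(lra)) as [h1 h2].
      rewrite Hsig_id by lra. split; [|split; auto; lra]. split; [lra|].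
      specialize (Sb (c - zeta) ltac:(lra)).
      assert (S 0 <= M) by (apply Hi; lra).
      assert (exp (- gam * (c - zeta)) <= exp (gam * zeta - eta * c)).
      { apply exp_mono. assert (eta * c <= gam * c) by nra. lra. }
      assert (0 < exp (- gam * (c - zeta))) by apply exp_pos. nra. }
  set (A := k * b * E * M * (M * exp (gam * zeta))).
  assert (HA : 0 < A).
  { unfold A. assert (0 < exp (gam * zeta)) by apply exp_pos.
    assert (0 < k * b * E * M) by (apply Rmult_lt_0_compat; [|lra]; apply Rmult_lt_0_compat; [|lra]; nra).
    apply Rmult_lt_0_compat; auto. apply Rmult_lt_0_compat; auto. }
  set (K := A / (m - eta)).
  assert (HK : 0 < K) by (unfold K; apply Rdiv_lt_0_compat; lra).
  assert (HKA : K * (m - eta) = A) by (unfold K; field; lra).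
  assert (Gdec : forall t, 0 <= t ->
     (Q t - dm) * exp (m * t) - K * exp ((m - eta) * t) <= (Q 0 - dm) - K).
  { intros t Ht.
    assert (H := nonincr (fun x => (Q x - dm) * exp (m * x) - K * exp ((m - eta) * x))
       (fun x => ((d - m * Q x - k * sigma (Q x) * S x
              + k * b * E * sigma (Q (x - zeta)) * S (x - zeta) - 0) + m * (Q x - dm)) * exp (m * x)
                 - K * ((m - eta) * exp ((m - eta) * x))) 0 t Ht).
    simpl in H. rewrite !Rmult_0_r, exp_0, !Rmult_1_r in H. apply H.
    - intros x Hx. apply continuity_pt_minus. apply continuity_pt_mult.
      apply continuity_pt_minus. apply (cont_from_pt (-zeta)); auto; lra.
      apply continuity_pt_const. intros u v; reflexivity. apply cexp.
      apply continuity_pt_scal. apply cexp.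
    - intros x Hx. apply dminus.
      + apply (dprod_exp (fun x => Q x - dm)). apply dminus. apply HQode; lra. apply dconst.
      + apply dscal. apply dexp.
    - intros x Hx. destruct (Hinv x ltac:(lra)) as [h1 h2].
      destruct (SDb x ltac:(lra)) as [[s1 s2] [s3 s4]].
      rewrite Hsig_id by lra. rewrite s3.
      assert (e1 : 0 < exp (m * x)) by apply exp_pos.
      assert (e2 : exp (gam * zeta - eta * x) * exp (m * x) = exp (gam * zeta) * exp ((m - eta) * x)).
      { rewrite <- !exp_plus. f_equal. ring. }
      assert (i1 : d - m * Q x - k * Q x * S x + k * b * E * Q (x - zeta) * S (x - zeta) - 0
              + m * (Q x - dm) <= k * b * E * M * S (x - zeta)).
      { assert (0 <= k * Q x * S x) by (apply Rmult_le_pos; [apply Rmult_le_pos|]; lra).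
        assert (0 < k * b * E) by (apply Rmult_lt_0_compat; [|lra]; nra).
        assert (k * b * E * (Q (x - zeta) * S (x - zeta)) <= k * b * E * (M * S (x - zeta)))
          by (apply Rmult_le_compat_l; nra).
        nra. }
      assert (i2 : k * b * E * M * S (x - zeta) <= k * b * E * M * (M * exp (gam * zeta - eta * x))).
      { apply Rmult_le_compat_l; [|lra].
        apply Rmult_le_pos; [|lra]. apply Rmult_le_pos; [|lra]. nra. }
      assert (i3 : (d - m * Q x - k * Q x * S x + k * b * E * Q (x - zeta) * S (x - zeta) - 0
              + m * (Q x - dm)) * exp (m * x) <= A * exp ((m - eta) * x)).
      { apply Rle_trans with (k * b * E * M * (M * exp (gam * zeta - eta * x)) * exp (m * x)).
        apply Rmult_le_compat_r; lra.
        unfold A. rewrite !Rmult_assoc, e2. right; ring. }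
      rewrite <- HKA in i3. lra. }
  exists (S 0 + (Q 0 - dm) + K + 1). split.
  { assert (dm <= Q 0) by (apply Hi; lra). lra. }
  intros t Ht.
  destruct (Hinv t Ht) as [h1 h2].
  assert (ee : exp (- eta * t) > 0) by apply exp_pos.
  assert (Sbt : S t <= S 0 * exp (- eta * t)).
  { eapply Rle_trans. apply Sb; auto. apply Rmult_le_compat_l; [lra|].
    apply exp_mono. nra. }
  assert (Qbt : Q t - dm <= (Q 0 - dm + K) * exp (- eta * t)).
  { specialize (Gdec t Ht).
    assert (f1 : exp (- m * t) * exp (m * t) = 1) by (rewrite <- exp_plus; replace (-m*t + m*t) with 0 by ring; apply exp_0).
    assert (f2 : exp (- m * t) * exp ((m - eta) * t) = exp (- eta * t)) by (rewrite <- exp_plus; f_equal; ring).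
    assert (f3 : exp (- m * t) <= exp (- eta * t)) by (apply exp_mono; nra).
    assert (f4 : 0 < exp (- m * t)) by apply exp_pos.
    assert (Q0 : dm <= Q 0) by (apply Hi; lra).
    assert (exp (- m * t) * ((Q t - dm) * exp (m * t) - K * exp ((m - eta) * t))
            <= exp (- m * t) * (Q 0 - dm - K)) by (apply Rmult_le_compat_l; lra).
    replace (exp (- m * t) * ((Q t - dm) * exp (m * t) - K * exp ((m - eta) * t)))
      with ((Q t - dm) * (exp (- m * t) * exp (m * t)) - K * (exp (- m * t) * exp ((m - eta) * t))) in H by ring.
    rewrite f1, f2 in H. nra. }
  assert (sqrt ((S t - 0) ^ 2 + (Q t - dm) ^ 2) <= S t + (Q t - dm)).
  { rewrite <- (sqrt_pow2 (S t + (Q t - dm))) by lra. apply sqrt_le_1_alt. nra. }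
  fold eta. nra.
Qed.
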